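(* Under the hypotheses of Theorem 1 (namely: $p$ positive, continuous, even on $(-1,1)$ with no nontrivial solution of $u''+pu=0$ having more than one zero in $(-1,1)$; $F$ the solution of $\mathcal{S}F=2p$ with $F(0)=0,F'(0)=1,F''(0)=0$; $\varphi:(-1,1)\to\mathbb{R}^n$ of class $C^3$ with $\varphi'\neq0$, $\varphi(0)=0$, $|\varphi'(0)|=1$, $\langle\varphi'(0),\varphi''(0)\rangle=0$, and $S_1\varphi\le 2p$ on $(-1,1)$), one has for all $x\in(-1,1)$ $$\frac{|\varphi(x)|}{|\varphi'(x)|^{1/2}}\ \ge\ \frac{|F(x)|}{F'(x)^{1/2}}.$$
   Context: For a real function $g$ with $g'\neq0$, $\mathcal{S}g=(g''/g')'-\tfrac12(g''/g')^2$. For a $C^3$ curve $\varphi$ into $\mathbb{R}^n$ with $\varphi'\neq0$, the Ahlfors Schwarzian is $S_1\varphi=\frac{\langle\varphi',\varphi'''\rangle}{|\varphi'|^2}-3\frac{\langle\varphi',\varphi''\rangle^2}{|\varphi'|^4}+\frac32\frac{|\varphi''|^2}{|\varphi'|^2}$, with Euclidean inner product and norm. *)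

(* Defs.v *)
From Stdlib Require Import Reals Lra List.
Open Scope R_scope.

Definition I1 (x : R) : Prop := -1 < x < 1.

(* vectors of R^n represented as nat -> R, only indices 0..n-1 matter *)
Definition inner (n : nat) (u v : nat -> R) : R :=
  fold_right Rplus 0 (map (fun i => u i * v i) (seq 0 n)).
Definition vnorm (n : nat) (u : nat -> R) : R := sqrt (inner n u u).

(* Ahlfors Schwarzian of a curve with derivative vectors d1, d2, d3 *)
Definition S1 (n : nat) (d1 d2 d3 : nat -> R) : R :=
  inner n d1 d3 / (vnorm n d1) ^ 2
  - 3 * (inner n d1 d2) ^ 2 / (vnorm n d1) ^ 4
  + 3 / 2 * (vnorm n d2) ^ 2 / (vnorm n d1) ^ 2.

Definition sol_on (p u u1 u2 : R -> R) : Prop :=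
  forall x, I1 x ->
    derivable_pt_lim u x (u1 x) /\ derivable_pt_lim u1 x (u2 x) /\
    u2 x + p x * u x = 0.

Definition disconjugate (p : R -> R) : Prop :=
  forall u u1 u2 : R -> R, sol_on p u u1 u2 ->
    (exists x, I1 x /\ u x <> 0) ->
    ~ (exists a b, I1 a /\ I1 b /\ a < b /\ u a = 0 /\ u b = 0).

(* Main.v *)
Require Import Defs.
From Stdlib Require Import Reals Lra Lia List Psatz Ranalysis5.
Open Scope R_scope.

Lemma ddmul f g x a b : derivable_pt_lim f x a -> derivable_pt_lim g x b ->
  derivable_pt_lim (fun t => f t * g t) x (a * g x + f x * b).
Proof. intros; apply (derivable_pt_lim_mult f g); auto. Qed.
Lemma ddplus f g x a b : derivable_pt_lim f x a -> derivable_pt_lim g x b ->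
  derivable_pt_lim (fun t => f t + g t) x (a + b).
Proof. intros; apply (derivable_pt_lim_plus f g); auto. Qed.
Lemma ddminus f g x a b : derivable_pt_lim f x a -> derivable_pt_lim g x b ->
  derivable_pt_lim (fun t => f t - g t) x (a - b).
Proof. intros; apply (derivable_pt_lim_minus f g); auto. Qed.
Lemma dddiv f g x a b : derivable_pt_lim f x a -> derivable_pt_lim g x b -> g x <> 0 ->
  derivable_pt_lim (fun t => f t / g t) x ((a * g x - b * f x) / (g x)²).
Proof. intros; apply (derivable_pt_lim_div f g); auto. Qed.
Lemma ddconst c x : derivable_pt_lim (fun _ => c) x 0.
Proof. apply derivable_pt_lim_const. Qed.
Lemma ddid x : derivable_pt_lim (fun t => t) x 1.
Proof. apply derivable_pt_lim_id. Qed.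
Lemma ddsqrt f x a : derivable_pt_lim f x a -> 0 < f x ->
  derivable_pt_lim (fun t => sqrt (f t)) x (a / (2 * sqrt (f x))).
Proof. intros H Hp.
  replace (a / (2 * sqrt (f x))) with (/ (2 * sqrt (f x)) * a) by (unfold Rdiv; ring).
  apply (derivable_pt_lim_comp f sqrt); auto. apply derivable_pt_lim_sqrt; auto. Qed.
Lemma ddext f g x l l' : (forall z, f z = g z) -> l = l' -> derivable_pt_lim f x l -> derivable_pt_lim g x l'.
Proof. intros H ->; apply derivable_pt_lim_ext; auto. Qed.
Lemma ddrefl f x l : derivable_pt_lim f (- x) l -> derivable_pt_lim (fun t => f (- t)) x (- l).
Proof. intro H. replace (- l) with (l * -1) by ring.
  apply (derivable_pt_lim_comp (fun t => - t) f).
  - replace (-1) with (- (1)) by ring. apply (derivable_pt_lim_opp (fun t => t)). apply ddid.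
  - exact H. Qed.
Lemma D_cont f x l : derivable_pt_lim f x l -> continuity_pt f x.
Proof. intro H. apply (derivable_continuous_pt f x (exist _ l H)). Qed.
Lemma cont_eps f x : continuity_pt f x -> forall eps, 0 < eps ->
  exists del, 0 < del /\ forall y, Rabs (y - x) < del -> Rabs (f y - f x) < eps.
Proof. intros H eps He. destruct (H eps He) as [d [Hd Hy]]. exists d; split; auto.
  intros y Hyx. destruct (Req_dec y x) as [->|Hne]. rewrite Rminus_diag, Rabs_R0; auto.
  apply Hy. split. split. exact I. auto. simpl. unfold R_dist. auto. Qed.

Definition lsum (l : list nat) (h : nat -> R) := fold_right Rplus 0 (map h l).
Lemma inner_lsum n u v : inner n u v = lsum (seq 0 n) (fun i => u i * v i).
Proof. reflexivity. Qed.
Lemma lsum_ext l h h' : (forall i, In i l -> h i = h' i) -> lsum l h = lsum l h'.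
Proof. induction l; simpl; intros; auto. unfold lsum in *; simpl. rewrite H by auto. f_equal. apply IHl; auto. Qed.
Lemma lsum_lin l a b h h' : lsum l (fun i => a * h i + b * h' i) = a * lsum l h + b * lsum l h'.
Proof. induction l; unfold lsum in *; simpl; [ring|]. rewrite IHl. ring. Qed.
Lemma lsum_nonneg l h : (forall i, In i l -> 0 <= h i) -> 0 <= lsum l h.
Proof. induction l; unfold lsum in *; simpl; intros; [lra|]. 
  assert (0 <= h a) by auto. assert (0 <= fold_right Rplus 0 (map h l)) by (apply IHl; auto). lra. Qed.
Lemma lsum_D l (h h' : nat -> R -> R) x : (forall i, In i l -> derivable_pt_lim (h i) x (h' i x)) ->
  derivable_pt_lim (fun t => lsum l (fun i => h i t)) x (lsum l (fun i => h' i x)).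
Proof. induction l; unfold lsum in *; simpl; intros.
  - apply ddconst.
  - apply ddplus; auto. Qed.

Lemma lsum_plus l h h' : lsum l (fun i => h i + h' i) = lsum l h + lsum l h'.
Proof. induction l; unfold lsum in *; simpl; [ring|]. rewrite IHl. ring. Qed.

Definition ip n (u v : nat -> R -> R) t := inner n (fun i => u i t) (fun i => v i t).

Lemma ip_D n u u' v v' x :
  (forall i, (i < n)%nat -> derivable_pt_lim (u i) x (u' i x)) ->
  (forall i, (i < n)%nat -> derivable_pt_lim (v i) x (v' i x)) ->
  derivable_pt_lim (ip n u v) x (ip n u' v x + ip n u v' x).
Proof. intros Hu Hv. unfold ip. rewrite !inner_lsum.
  apply ddext with (f := fun t => lsum (seq 0 n) (fun i => (fun i t => u i t * v i t) i t))
    (l := lsum (seq 0 n) (fun i => (fun i x => u' i x * v i x + u i x * v' i x) i x)).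
  - reflexivity.
  - unfold ip; rewrite ?inner_lsum, <- lsum_plus. reflexivity.
  - apply (lsum_D (seq 0 n) (fun i t => u i t * v i t) (fun i x => u' i x * v i x + u i x * v' i x)). intros i Hi. apply in_seq in Hi. apply ddmul; [apply Hu|apply Hv]; lia. Qed.

Lemma inner_sym n u v : inner n u v = inner n v u.
Proof. rewrite !inner_lsum. apply lsum_ext. intros; ring. Qed.
Lemma inner_nonneg n u : 0 <= inner n u u.
Proof. rewrite inner_lsum. apply lsum_nonneg. intros; nra. Qed.
Lemma inner_comb3 n a b c (x y z : R) :
  inner n (fun i => x * a i + y * b i + z * c i) (fun i => x * a i + y * b i + z * c i) =
  x*x*inner n a a + y*y*inner n b b + z*z*inner n c c + 2*x*y*inner n a b + 2*x*z*inner n a c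
  + 2*y*z*inner n b c.
Proof. rewrite !inner_lsum. unfold lsum. induction (seq 0 n); simpl; [ring|]. rewrite IHl. ring. Qed.
Lemma inner_comb3_nonneg n a b c x y z :
  0 <= x*x*inner n a a + y*y*inner n b b + z*z*inner n c c + 2*x*y*inner n a b + 2*x*z*inner n a c
  + 2*y*z*inner n b c.
Proof. rewrite <- inner_comb3. apply inner_nonneg. Qed.
Lemma CS n u v : 0 < inner n v v -> (inner n u v)^2 <= inner n u u * inner n v v.
Proof. intro Hv. pose proof (inner_comb3_nonneg n u v v (inner n v v) (- inner n u v) 0).
  nra. Qed.

Lemma ip_sym n u v t : ip n u v t = ip n v u t.
Proof. unfold ip; apply inner_sym. Qed.

Lemma sqrt_facts y : 0 < y -> 0 < sqrt y /\ sqrt y * sqrt y = y.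
Proof. intro; split; [apply sqrt_lt_R0; auto| apply sqrt_sqrt; lra]. Qed.

Lemma G_alg A B C D a s2 s4 : 0 < a -> 0 < s2 -> 0 < s4 -> a * a = A -> s2 * s2 = C -> s4 * s4 = s2 ->
  ((2 * B / (2 * a)) * s4 - ((2 * D / (2 * s2)) / (2 * s4)) * a) / s4² = a / s4 * (B / A - D / (2 * C)).
Proof. intros. subst. unfold Rsqr. field. repeat split; lra. Qed.


Lemma A_D n phi phi1 x : (forall i, (i < n)%nat -> derivable_pt_lim (phi i) x (phi1 i x)) ->
  derivable_pt_lim (ip n phi phi) x (2 * ip n phi phi1 x).
Proof. intro H. eapply ddext; [reflexivity| |apply ip_D; eauto]. rewrite (ip_sym n phi1). ring. Qed.

Lemma ddscal2 f x l : derivable_pt_lim f x l -> derivable_pt_lim (fun t => 2 * f t) x (2 * l).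
Proof. intro H. eapply ddext; [reflexivity| |apply (ddmul (fun _ => 2) f); [apply ddconst|exact H]]. ring. Qed.

Lemma G_D n phi phi1 phi2 x
  (H1 : forall i, (i < n)%nat -> derivable_pt_lim (phi i) x (phi1 i x))
  (H2 : forall i, (i < n)%nat -> derivable_pt_lim (phi1 i) x (phi2 i x))
  (HA : 0 < ip n phi phi x) (HC : 0 < ip n phi1 phi1 x) :
  derivable_pt_lim (fun t => sqrt (ip n phi phi t) / sqrt (sqrt (ip n phi1 phi1 t))) x
   (sqrt (ip n phi phi x) / sqrt (sqrt (ip n phi1 phi1 x)) *
     (ip n phi phi1 x / ip n phi phi x - ip n phi1 phi2 x / (2 * ip n phi1 phi1 x))).
Proof.
  destruct (sqrt_facts _ HA) as [Ha Ha2].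
  destruct (sqrt_facts _ HC) as [Hc Hc2].
  destruct (sqrt_facts _ Hc) as [Hc4 Hc42].
  assert (DA := ddsqrt _ _ _ (A_D n phi phi1 x H1) HA).
  assert (DC := ddsqrt _ _ _ (A_D n phi1 phi2 x H2) HC).
  assert (DC2 := ddsqrt _ _ _ DC Hc).
  eapply ddext; [reflexivity| | apply (dddiv _ _ _ _ _ DA DC2); lra].
  apply G_alg; auto.
Qed.

Lemma g_D n phi phi1 phi2 phi3 x
  (H1 : forall i, (i < n)%nat -> derivable_pt_lim (phi i) x (phi1 i x))
  (H2 : forall i, (i < n)%nat -> derivable_pt_lim (phi1 i) x (phi2 i x))
  (H3 : forall i, (i < n)%nat -> derivable_pt_lim (phi2 i) x (phi3 i x))
  (HA : 0 < ip n phi phi x) (HC : 0 < ip n phi1 phi1 x) :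
  derivable_pt_lim (fun t => ip n phi phi1 t / ip n phi phi t - ip n phi1 phi2 t / (2 * ip n phi1 phi1 t)) x
   (((ip n phi1 phi1 x + ip n phi phi2 x) * ip n phi phi x - 2 * ip n phi phi1 x * ip n phi phi1 x) / (ip n phi phi x) ^ 2
    - ((ip n phi2 phi2 x + ip n phi1 phi3 x) * (2 * ip n phi1 phi1 x) - 2 * (2 * ip n phi1 phi2 x) * ip n phi1 phi2 x)
       / (2 * ip n phi1 phi1 x) ^ 2).
Proof.
  assert (DB := ip_D n phi phi1 phi1 phi2 x H1 H2).
  assert (DA := A_D n phi phi1 x H1).
  assert (DD := ip_D n phi1 phi2 phi2 phi3 x H2 H3).
  assert (DC := ddscal2 _ _ _ (A_D n phi1 phi2 x H2)).
  eapply ddext; [reflexivity| | apply ddminus; [apply (dddiv _ _ _ _ _ DB DA); lra | apply (dddiv _ _ _ _ _ DD DC); lra]].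
  unfold Rsqr. simpl. field. split; lra.
Qed.

Lemma U_D F F1 F2 x : derivable_pt_lim F x (F1 x) -> derivable_pt_lim F1 x (F2 x) -> 0 < F1 x ->
  derivable_pt_lim (fun t => F t / sqrt (F1 t)) x ((F1 x - F x * (F2 x / F1 x) / 2) / sqrt (F1 x)).
Proof. intros HF HF1 Hp. destruct (sqrt_facts _ Hp) as [Hs Hs2].
  eapply ddext; [reflexivity| | apply (dddiv _ _ _ _ _ HF (ddsqrt _ _ _ HF1 Hp)); lra].
  set (s := sqrt (F1 x)) in *. rewrite <- Hs2. unfold Rsqr. field. lra. Qed.

Lemma U1_D p F F1 F2 x : derivable_pt_lim F x (F1 x) -> derivable_pt_lim F1 x (F2 x) -> 0 < F1 x ->
  derivable_pt_lim (fun t => F2 t / F1 t) x (2 * p x + 1 / 2 * (F2 x / F1 x) ^ 2) ->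
  derivable_pt_lim (fun t => (F1 t - F t * (F2 t / F1 t) / 2) / sqrt (F1 t)) x (- p x * (F x / sqrt (F1 x))).
Proof. intros HF HF1 Hp Hq. destruct (sqrt_facts _ Hp) as [Hs Hs2].
  assert (DN : derivable_pt_lim (fun t => F1 t - F t * (F2 t / F1 t) / 2) x
     (F2 x - (F1 x * (F2 x / F1 x) + F x * (2 * p x + 1 / 2 * (F2 x / F1 x) ^ 2)) / 2)).
  { eapply ddext; [reflexivity| | apply ddminus; [exact HF1| apply (ddmul _ (fun _ => /2)); [apply ddmul; eauto| apply ddconst]]].
    cbv beta. field. lra. }
  eapply ddext; [reflexivity| | apply (dddiv _ _ _ _ _ DN (ddsqrt _ _ _ HF1 Hp)); lra].
  set (s := sqrt (F1 x)) in *. rewrite <- Hs2. unfold Rsqr. field. lra. Qed.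
Lemma key_alg A B C D E Fc H P S :
  0 < A -> 0 < C ->
  S = H / C - 3 * D ^ 2 / C ^ 2 + 3 / 2 * Fc / C ->
  S <= 2 * P ->
  0 <= (2*C^2)*(2*C^2)*A + (-(2*C*B + A*D))*(-(2*C*B + A*D))*C + (A*C)*(A*C)*Fc
     + 2*(2*C^2)*(-(2*C*B + A*D))*B + 2*(2*C^2)*(A*C)*E + 2*(-(2*C*B + A*D))*(A*C)*D ->
  0 <= (B / A - D / (2 * C)) ^ 2 +
       (((C + E) * A - 2 * B * B) / A ^ 2 - ((Fc + H) * (2 * C) - 2 * (2 * D) * D) / (2 * C) ^ 2) + P.
Proof.
  intros HA HC HS HSP HY.
  set (Y := (2*C^2)*(2*C^2)*A + (-(2*C*B + A*D))*(-(2*C*B + A*D))*C + (A*C)*(A*C)*Fc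
     + 2*(2*C^2)*(-(2*C*B + A*D))*B + 2*(2*C^2)*(A*C)*E + 2*(-(2*C*B + A*D))*(A*C)*D) in *.
  assert (Heq : (B / A - D / (2 * C)) ^ 2 +
       (((C + E) * A - 2 * B * B) / A ^ 2 - ((Fc + H) * (2 * C) - 2 * (2 * D) * D) / (2 * C) ^ 2) + S / 2
       = Y / (4 * A^2 * C^3)).
  { rewrite HS. unfold Y. field. lra. }
  assert (0 <= Y / (4 * A^2 * C^3)). { unfold Rdiv; apply Rmult_le_pos; auto. left; apply Rinv_0_lt_compat. apply Rmult_lt_0_compat; [nra| apply pow_lt; auto]. }
  lra.
Qed.
Lemma W_bound A B C D a c4 u u1 : 0 < C -> B^2 <= A*C -> a*a = A -> 0 < a -> 0<c4 -> c4^4 = C -> 1/2 < C < 3/2 -> a < 1 ->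
 Rabs (a/c4 * (B/A - D/(2*C)) * u - a/c4 * u1) <= (2 + 16 * Rabs D) * Rabs u + 2 * a * Rabs u1.
Proof.
  intros HC HB Ha Ha0 Hc4 Hc44 HCb Ha1.
  assert (Hc4l : 1/2 < c4). { destruct (Rle_lt_dec c4 (1/2)); auto. exfalso.
     assert (c4^4 <= (1/2)^4) by (apply pow_incr; lra). lra. }
  assert (Hc4u : c4 < 2). { destruct (Rle_lt_dec 2 c4); auto. exfalso.
     assert (2^4 <= c4^4) by (apply pow_incr; lra). lra. }
  assert (HBb : Rabs B <= a * c4^2).
  { apply Rabs_le. subst. assert (0 < a * c4^2) by (apply Rmult_lt_0_compat; auto; apply pow_lt; auto).
    split; nra. }
  assert (E1 : Rabs (a/c4 * (B/A)) <= 2).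
  { subst A. replace (a/c4*(B/(a*a))) with (B / (a * c4)) by (field; lra).
    unfold Rdiv. rewrite Rabs_mult, Rabs_inv, (Rabs_right (a*c4)) by nra.
    apply (Rmult_le_reg_r (a*c4)); [nra|]. rewrite Rmult_assoc, Rinv_l by nra. nra. }
  assert (E2 : Rabs (a/c4 * (D/(2*C))) <= 16 * Rabs D).
  { subst C. replace (a/c4*(D/(2*c4^4))) with (D * (a / (2 * c4^5))) by (field; lra).
    rewrite Rabs_mult, (Rmult_comm 16). apply Rmult_le_compat_l. apply Rabs_pos.
    rewrite Rabs_right. 2:{ apply Rle_ge. unfold Rdiv. apply Rmult_le_pos. lra. left; apply Rinv_0_lt_compat. nra. }
    apply (Rmult_le_reg_r (2*c4^5)). nra. unfold Rdiv. rewrite Rmult_assoc, Rinv_l by nra.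
    assert ((1/2)^5 <= c4^5) by (apply pow_incr; lra). nra. }
  assert (E3 : Rabs (a/c4) <= 2 * a).
  { rewrite Rabs_right. 2:{ apply Rle_ge. unfold Rdiv. apply Rmult_le_pos. lra. left; apply Rinv_0_lt_compat. nra. }
    apply (Rmult_le_reg_r c4). lra. unfold Rdiv. rewrite Rmult_assoc, Rinv_l by lra. nra. }
  replace (a/c4 * (B/A - D/(2*C)) * u - a/c4 * u1) with ((a/c4*(B/A) - a/c4*(D/(2*C))) * u - a/c4 * u1) by ring.
  eapply Rle_trans. apply Rabs_triang. rewrite Rabs_Ropp, !Rabs_mult.
  assert (Rabs (a/c4*(B/A) - a/c4*(D/(2*C))) <= 2 + 16 * Rabs D).
  { eapply Rle_trans. apply Rabs_triang. rewrite Rabs_Ropp. lra. }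
  apply Rplus_le_compat; apply Rmult_le_compat_r; try apply Rabs_pos; auto.
Qed.

Lemma deriv_bound f l : derivable_pt_lim f 0 l -> f 0 = 0 ->
  forall eps, 0 < eps -> exists del, 0 < del /\ forall s, 0 < s < del -> Rabs (f s - l * s) < eps * s.
Proof. intros Hd H0 eps He. destruct (Hd eps He) as [[d Hd0] Hdel]. exists d; split; auto.
  intros s Hs. assert (Hh := Hdel s ltac:(lra) ltac:(simpl; rewrite Rabs_right; lra)).
  rewrite Rplus_0_l, H0, Rminus_0_r in Hh.
  replace (f s - l * s) with ((f s / s - l) * s) by (field; lra).
  rewrite Rabs_mult, (Rabs_right s) by lra. apply Rmult_lt_compat_r; lra. Qed.

Lemma lsum_zero l h : (forall i, In i l -> h i = 0) -> lsum l h = 0.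
Proof. induction l; unfold lsum in *; simpl; intros; auto. rewrite H by auto. rewrite IHl; auto. ring. Qed.

Lemma lowA n phi phi1
  (H1 : forall i, (i < n)%nat -> derivable_pt_lim (phi i) 0 (phi1 i 0))
  (H0 : forall i, (i < n)%nat -> phi i 0 = 0) (HC0 : ip n phi1 phi1 0 = 1) :
  forall eps, 0 < eps < 1 -> exists del, 0 < del /\ forall s, 0 < s < del -> (1 - eps) * s < sqrt (ip n phi phi s).
Proof.
  intros eps He.
  assert (Dh : derivable_pt_lim (ip n phi (fun i _ => phi1 i 0)) 0 1).
  { eapply ddext; [reflexivity| | apply (ip_D n phi phi1 (fun i _ => phi1 i 0) (fun i _ => 0)); auto].
    - unfold ip at 2. rewrite inner_lsum, lsum_zero. rewrite <- HC0. unfold ip. ring. intros; ring.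
    - intros; apply ddconst. }
  assert (h0 : ip n phi (fun i _ => phi1 i 0) 0 = 0).
  { unfold ip; rewrite inner_lsum; apply lsum_zero. intros i Hi. apply in_seq in Hi. rewrite H0 by lia. ring. }
  destruct (deriv_bound _ _ Dh h0 eps ltac:(lra)) as [d [Hd Hb]].
  exists d; split; auto. intros s Hs. specialize (Hb s Hs).
  set (h := ip n phi (fun i _ => phi1 i 0) s) in *.
  assert (Hh : (1 - eps) * s < h). { apply Rabs_def2 in Hb. lra. }
  assert (CSh : h ^ 2 <= ip n phi phi s).
  { assert (HC0' : inner n (fun i => phi1 i 0) (fun i => phi1 i 0) = 1) by exact HC0.
    pose proof (CS n (fun i => phi i s) (fun i => phi1 i 0) ltac:(lra)) as HH. rewrite HC0' in HH.
    unfold h, ip. lra. }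
  assert (0 < (1-eps)*s) by nra.
  apply Rlt_le_trans with h; auto. rewrite <- (sqrt_pow2 h) by lra. apply sqrt_le_1_alt; auto.
Qed.

Lemma S1_eq n phi1 phi2 phi3 t : 0 < ip n phi1 phi1 t ->
  S1 n (fun i => phi1 i t) (fun i => phi2 i t) (fun i => phi3 i t) =
  ip n phi1 phi3 t / ip n phi1 phi1 t - 3 * ip n phi1 phi2 t ^ 2 / ip n phi1 phi1 t ^ 2
  + 3 / 2 * ip n phi2 phi2 t / ip n phi1 phi1 t.
Proof. intro HC. unfold S1, vnorm, ip.
  replace (sqrt (inner n (fun i => phi1 i t) (fun i => phi1 i t)) ^ 4) with
    ((sqrt (inner n (fun i => phi1 i t) (fun i => phi1 i t)) ^ 2) ^ 2) by ring.
  rewrite !pow2_sqrt by apply inner_nonneg. reflexivity. Qed.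

Lemma ip_zero0 n phi : (forall i, (i < n)%nat -> phi i 0 = 0) -> ip n phi phi 0 = 0.
Proof. intro H. unfold ip; rewrite inner_lsum; apply lsum_zero. intros i Hi. apply in_seq in Hi. rewrite H by lia. ring. Qed.

Lemma c4_facts y : 0 < y -> 0 < sqrt (sqrt y) /\ sqrt (sqrt y) ^ 4 = y.
Proof. intro Hy. destruct (sqrt_facts _ Hy) as [H1 H2]. destruct (sqrt_facts _ H1) as [H3 H4].
  split; auto. set (s2 := sqrt y) in *. set (s4 := sqrt s2) in *. rewrite <- H2, <- H4. ring. Qed.

Lemma c4_lt y e : 0 < y -> 0 < e -> y < 1 + e -> sqrt (sqrt y) < 1 + e.
Proof. intros Hy He Hye. destruct (c4_facts _ Hy) as [H1 H2].
  destruct (Rlt_le_dec (sqrt (sqrt y)) (1+e)); auto. exfalso.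
  assert ((1+e)^4 <= sqrt (sqrt y) ^4) by (apply pow_incr; lra).
  assert (1 + e <= (1+e)^4). { assert (1 <= (1+e)^3) by (apply pow_R1_Rle; lra). nra. }
  lra. Qed.

Lemma I1_of s : 0 < s < 1 -> I1 s.
Proof. unfold I1; lra. Qed.

Lemma main_pos n phi phi1 phi2 phi3 p F F1 F2
 (Hphi1 : forall i x, (i < n)%nat -> I1 x -> derivable_pt_lim (phi i) x (phi1 i x))
 (Hphi2 : forall i x, (i < n)%nat -> I1 x -> derivable_pt_lim (phi1 i) x (phi2 i x))
 (Hphi3 : forall i x, (i < n)%nat -> I1 x -> derivable_pt_lim (phi2 i) x (phi3 i x))
 (HC : forall x, I1 x -> 0 < ip n phi1 phi1 x)
 (Hphi0 : forall i, (i < n)%nat -> phi i 0 = 0)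
 (HC0 : ip n phi1 phi1 0 = 1)
 (HF1 : forall x, I1 x -> derivable_pt_lim F x (F1 x))
 (HF2 : forall x, I1 x -> derivable_pt_lim F1 x (F2 x))
 (HF1pos : forall x, I1 x -> 0 < F1 x)
 (HFschw : forall x, I1 x -> derivable_pt_lim (fun t => F2 t / F1 t) x (2 * p x + 1 / 2 * (F2 x / F1 x) ^ 2))
 (HF0 : F 0 = 0) (HF10 : F1 0 = 1)
 (HS1 : forall x, I1 x -> S1 n (fun i => phi1 i x) (fun i => phi2 i x) (fun i => phi3 i x) <= 2 * p x)
 x (Hx : 0 < x < 1) (HA : forall s, 0 < s <= x -> 0 < ip n phi phi s) :
 F x / sqrt (F1 x) <= sqrt (ip n phi phi x) / sqrt (sqrt (ip n phi1 phi1 x)).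
Proof.
  pose (G t := sqrt (ip n phi phi t) / sqrt (sqrt (ip n phi1 phi1 t))).
  pose (g t := ip n phi phi1 t / ip n phi phi t - ip n phi1 phi2 t / (2 * ip n phi1 phi1 t)).
  pose (g' t := ((ip n phi1 phi1 t + ip n phi phi2 t) * ip n phi phi t - 2 * ip n phi phi1 t * ip n phi phi1 t) / (ip n phi phi t) ^ 2
    - ((ip n phi2 phi2 t + ip n phi1 phi3 t) * (2 * ip n phi1 phi1 t) - 2 * (2 * ip n phi1 phi2 t) * ip n phi1 phi2 t)
       / (2 * ip n phi1 phi1 t) ^ 2).
  pose (U t := F t / sqrt (F1 t)).
  pose (U1 t := (F1 t - F t * (F2 t / F1 t) / 2) / sqrt (F1 t)).
  pose (W t := G t * (g t * U t - U1 t)).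
  assert (I0 : I1 0) by (unfold I1; lra).
  assert (Ix : forall s, 0 < s <= x -> I1 s) by (intros; unfold I1; lra).
  assert (HFpos : forall s, 0 < s < 1 -> 0 < F s).
  { intros s Hs. assert (Hd : forall c, 0 <= c <= s -> derivable_pt_lim F c (F1 c)).
    { intros c Hc. apply HF1. unfold I1; lra. }
    destruct (MVT_cor2 F F1 0 s ltac:(lra) Hd) as [c [Hc1 Hc2]].
    assert (0 < F1 c) by (apply HF1pos; unfold I1; lra). rewrite HF0 in Hc1. nra. }
  assert (HUpos : forall s, 0 < s < 1 -> 0 < U s).
  { intros s Hs. unfold U. apply Rdiv_lt_0_compat. auto. apply sqrt_lt_R0, HF1pos; unfold I1; lra. }
  assert (DG : forall s, 0 < s <= x -> derivable_pt_lim G s (G s * g s)).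
  { intros s Hs. apply G_D; [intros i Hi; apply Hphi1; auto|intros i Hi; apply Hphi2; auto|apply HA; auto|apply HC; auto]. }
  assert (Dg : forall s, 0 < s <= x -> derivable_pt_lim g s (g' s)).
  { intros s Hs. apply g_D; [intros i Hi; apply Hphi1; auto|intros i Hi; apply Hphi2; auto|intros i Hi; apply Hphi3; auto|apply HA; auto|apply HC; auto]. }
  assert (DU : forall s, I1 s -> derivable_pt_lim U s (U1 s)).
  { intros s Hs. apply U_D; auto. }
  assert (DU1 : forall s, I1 s -> derivable_pt_lim U1 s (- p s * U s)).
  { intros s Hs. apply U1_D; auto. }
  assert (DW : forall s, 0 < s <= x -> derivable_pt_lim W s (G s * U s * (g s ^ 2 + g' s + p s))).
  { intros s Hs. eapply ddext; [reflexivity| | apply ddmul; [apply DG; auto| apply ddminus; [apply ddmul; [apply Dg; auto| apply DU; auto]| apply DU1; auto]]].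
    cbv beta. ring. }
  assert (HGpos : forall s, 0 < s <= x -> 0 < G s).
  { intros s Hs. unfold G. apply Rdiv_lt_0_compat. apply sqrt_lt_R0, HA; auto.
    apply (c4_facts _ (HC s (Ix s Hs))). }
  assert (DWnn : forall s, 0 < s <= x -> 0 <= G s * U s * (g s ^ 2 + g' s + p s)).
  { intros s Hs. apply Rmult_le_pos. left; apply Rmult_lt_0_compat; [apply HGpos; auto| apply HUpos; lra].
    unfold g, g'. apply (key_alg _ _ _ _ _ _ _ _ (S1 n (fun i => phi1 i s) (fun i => phi2 i s) (fun i => phi3 i s))).
    - apply HA; auto.
    - apply HC; auto.
    - apply S1_eq. apply HC; auto.
    - apply HS1; auto.
    - apply (inner_comb3_nonneg n (fun i => phi i s) (fun i => phi1 i s) (fun i => phi2 i s)). }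
  assert (cC : continuity_pt (ip n phi1 phi1) 0)
    by (apply (D_cont _ _ _ (A_D n phi1 phi2 0 (fun i Hi => Hphi2 i 0 Hi I0)))).
  assert (cA : continuity_pt (ip n phi phi) 0)
    by (apply (D_cont _ _ _ (A_D n phi phi1 0 (fun i Hi => Hphi1 i 0 Hi I0)))).
  assert (cD : continuity_pt (ip n phi1 phi2) 0)
    by (apply (D_cont _ _ _ (ip_D n phi1 phi2 phi2 phi3 0 (fun i Hi => Hphi2 i 0 Hi I0) (fun i Hi => Hphi3 i 0 Hi I0)))).
  assert (cU : continuity_pt U 0) by (apply (D_cont _ _ _ (DU 0 I0))).
  assert (cU1 : continuity_pt U1 0) by (apply (D_cont _ _ _ (DU1 0 I0))).
  assert (A0 : ip n phi phi 0 = 0) by (apply ip_zero0; auto).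
  assert (U0 : U 0 = 0) by (unfold U; rewrite HF0; unfold Rdiv; ring).
  assert (Wsmall : forall eps, 0 < eps -> exists del, 0 < del /\ forall s, 0 < s < del -> s <= x -> Rabs (W s) < eps).
  { intros eps He.
    set (M := 2 + 16 * (Rabs (ip n phi1 phi2 0) + 1)).
    set (K := Rabs (U1 0) + 1).
    assert (HM : 0 < M) by (unfold M; pose proof (Rabs_pos (ip n phi1 phi2 0)); lra).
    assert (HK : 0 < K) by (unfold K; pose proof (Rabs_pos (U1 0)); lra).
    assert (He2 : 0 < eps / (4 * K)) by (apply Rdiv_lt_0_compat; lra).
    destruct (cont_eps _ _ cC (1/2) ltac:(lra)) as [d1 [Hd1 H1']].
    destruct (cont_eps _ _ cA (Rmin 1 ((eps/(4*K))^2))) as [d2 [Hd2 H2']].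
    { apply Rmin_pos; [lra| apply pow_lt; auto]. }
    destruct (cont_eps _ _ cD 1 ltac:(lra)) as [d3 [Hd3 H3']].
    destruct (cont_eps _ _ cU1 1 ltac:(lra)) as [d4 [Hd4 H4']].
    destruct (cont_eps _ _ cU (eps/(2*M))) as [d5 [Hd5 H5']].
    { apply Rdiv_lt_0_compat; lra. }
    exists (Rmin d1 (Rmin d2 (Rmin d3 (Rmin d4 d5)))). split.
    { repeat apply Rmin_pos; auto. }
    intros s Hs Hsx.
    assert (Hs0 : Rabs (s - 0) = s) by (rewrite Rminus_0_r, Rabs_right; lra).
    pose proof (Rmin_l d1 (Rmin d2 (Rmin d3 (Rmin d4 d5)))).
    pose proof (Rmin_r d1 (Rmin d2 (Rmin d3 (Rmin d4 d5)))).
    pose proof (Rmin_l d2 (Rmin d3 (Rmin d4 d5))).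
    pose proof (Rmin_r d2 (Rmin d3 (Rmin d4 d5))).
    pose proof (Rmin_l d3 (Rmin d4 d5)).
    pose proof (Rmin_r d3 (Rmin d4 d5)).
    pose proof (Rmin_l d4 d5). pose proof (Rmin_r d4 d5).
    specialize (H1' s ltac:(lra)). specialize (H2' s ltac:(lra)). specialize (H3' s ltac:(lra)).
    specialize (H4' s ltac:(lra)). specialize (H5' s ltac:(lra)).
    rewrite HC0 in H1'. rewrite A0, Rminus_0_r in H2'. rewrite U0, Rminus_0_r in H5'.
    assert (Hss : 0 < s <= x) by lra.
    assert (HAs := HA s Hss). assert (HCs := HC s (Ix s Hss)).
    destruct (sqrt_facts _ HAs) as [Ha Ha2].
    destruct (c4_facts _ HCs) as [Hc4 Hc44].
    assert (HCb : 1/2 < ip n phi1 phi1 s < 3/2) by (apply Rabs_def2 in H1'; lra).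
    rewrite Rabs_right in H2' by lra.
    assert (HA1 : ip n phi phi s < 1) by (pose proof (Rmin_l 1 ((eps/(4*K))^2)); lra).
    assert (HA2 : ip n phi phi s < (eps/(4*K))^2) by (pose proof (Rmin_r 1 ((eps/(4*K))^2)); lra).
    assert (Ha1 : sqrt (ip n phi phi s) < 1).
    { rewrite <- sqrt_1. apply sqrt_lt_1_alt. lra. }
    assert (Hae : sqrt (ip n phi phi s) < eps/(4*K)).
    { rewrite <- (sqrt_pow2 (eps/(4*K))) by lra. apply sqrt_lt_1_alt. lra. }
    assert (HBC : ip n phi phi1 s ^ 2 <= ip n phi phi s * ip n phi1 phi1 s)
      by (apply (CS n (fun i => phi i s) (fun i => phi1 i s)); auto).
    assert (Hw := W_bound _ _ _ (ip n phi1 phi2 s) _ _ (U s) (U1 s) HCs HBC Ha2 Ha Hc4 Hc44 HCb Ha1).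
    assert (HWe : W s = sqrt (ip n phi phi s) / sqrt (sqrt (ip n phi1 phi1 s)) *
      (ip n phi phi1 s / ip n phi phi s - ip n phi1 phi2 s / (2 * ip n phi1 phi1 s)) * U s
      - sqrt (ip n phi phi s) / sqrt (sqrt (ip n phi1 phi1 s)) * U1 s) by (unfold W, G, g; ring).
    rewrite HWe. eapply Rle_lt_trans; [exact Hw|].
    assert (HDs : Rabs (ip n phi1 phi2 s) <= Rabs (ip n phi1 phi2 0) + 1).
    { replace (ip n phi1 phi2 s) with ((ip n phi1 phi2 s - ip n phi1 phi2 0) + ip n phi1 phi2 0) by ring.
      eapply Rle_trans. apply Rabs_triang. lra. }
    assert (HU1s : Rabs (U1 s) <= K).
    { unfold K. replace (U1 s) with ((U1 s - U1 0) + U1 0) by ring.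
      eapply Rle_trans. apply Rabs_triang. lra. }
    assert (T1 : (2 + 16 * Rabs (ip n phi1 phi2 s)) * Rabs (U s) <= M * Rabs (U s)).
    { apply Rmult_le_compat_r. apply Rabs_pos. unfold M; lra. }
    assert (T2 : M * Rabs (U s) < eps / 2).
    { apply Rlt_le_trans with (M * (eps / (2 * M))). apply Rmult_lt_compat_l; auto. right; field; lra. }
    assert (T3 : 2 * sqrt (ip n phi phi s) * Rabs (U1 s) <= 2 * sqrt (ip n phi phi s) * K).
    { apply Rmult_le_compat_l; lra. }
    assert (T4 : 2 * sqrt (ip n phi phi s) * K < eps / 2).
    { apply Rlt_le_trans with (2 * (eps/(4*K)) * K). apply Rmult_lt_compat_r; lra. right; field; lra. }
    lra. }
  assert (Wnn : forall t, 0 < t <= x -> 0 <= W t).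
  { intros t Ht. destruct (Rle_lt_dec 0 (W t)) as [|HWt]; auto. exfalso.
    destruct (Wsmall (- W t) ltac:(lra)) as [d [Hd Hw]].
    set (s := Rmin d t / 2).
    assert (Hs1 : 0 < s) by (unfold s; apply Rdiv_lt_0_compat; [apply Rmin_pos|]; lra).
    assert (Hs2 : s < d) by (unfold s; pose proof (Rmin_l d t); lra).
    assert (Hs3 : s < t) by (unfold s; pose proof (Rmin_r d t); lra).
    assert (Hd' : forall c, s <= c <= t -> derivable_pt_lim W c (G c * U c * (g c ^ 2 + g' c + p c))).
    { intros c Hc. apply DW. lra. }
    destruct (MVT_cor2 _ _ s t Hs3 Hd') as [c [Hc1 Hc2]].
    assert (0 <= G c * U c * (g c ^ 2 + g' c + p c)) by (apply DWnn; lra).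
    assert (W s <= W t) by nra.
    specialize (Hw s ltac:(lra) ltac:(lra)). apply Rabs_def2 in Hw. lra. }
  assert (Dratio : forall s, 0 < s <= x -> derivable_pt_lim (fun t => G t / U t) s (W s / (U s) ^ 2)).
  { intros s Hs. assert (0 < U s) by (apply HUpos; lra).
    eapply ddext; [reflexivity| | apply dddiv; [apply DG; auto| apply DU; auto| lra]].
    unfold W, Rsqr. field. lra. }
  assert (mono : forall s, 0 < s < x -> G s / U s <= G x / U x).
  { intros s Hs. assert (Hd' : forall c, s <= c <= x -> derivable_pt_lim (fun t => G t / U t) c (W c / (U c) ^ 2)).
    { intros c Hc. apply Dratio. lra. }
    destruct (MVT_cor2 _ _ s x ltac:(lra) Hd') as [c [Hc1 Hc2]].
    assert (0 <= W c / U c ^ 2).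
    { apply Rmult_le_pos. apply Wnn; lra. left; apply Rinv_0_lt_compat, pow_lt, HUpos; lra. }
    nra. }
  change (U x <= G x).
  assert (HUx : 0 < U x) by (apply HUpos; lra).
  assert (HGx : 0 < G x) by (apply HGpos; lra).
  destruct (Rle_lt_dec (U x) (G x)) as [|Hlt]; auto. exfalso.
  set (lam := G x / U x).
  assert (Hlam : 0 < lam < 1).
  { unfold lam. split. apply Rdiv_lt_0_compat; auto.
    apply (Rmult_lt_reg_r (U x)); auto. unfold Rdiv. rewrite Rmult_assoc, Rinv_l by lra. lra. }
  set (eps := (1 - lam) / 8).
  assert (Heps : 0 < eps < 1) by (unfold eps; lra).
  destruct (lowA n phi phi1 (fun i Hi => Hphi1 i 0 Hi I0) Hphi0 HC0 eps Heps) as [da [Hda Ha]].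
  destruct (cont_eps _ _ cC eps ltac:(lra)) as [dc [Hdc Hc]].
  assert (U10 : U1 0 = 1) by (unfold U1; rewrite HF0, HF10, sqrt_1; field).
  destruct (deriv_bound U (U1 0) (DU 0 I0) U0 eps ltac:(lra)) as [du [Hdu Hu]].
  rewrite U10 in Hu.
  set (s := Rmin (Rmin da dc) (Rmin du x) / 2).
  pose proof (Rmin_l (Rmin da dc) (Rmin du x)). pose proof (Rmin_r (Rmin da dc) (Rmin du x)).
  pose proof (Rmin_l da dc). pose proof (Rmin_r da dc). pose proof (Rmin_l du x). pose proof (Rmin_r du x).
  assert (Hmpos : 0 < Rmin (Rmin da dc) (Rmin du x)) by (repeat apply Rmin_pos; lra).
  assert (Hs : 0 < s) by (unfold s; lra).
  assert (Hsx : s < x) by (unfold s; lra).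
  specialize (Ha s ltac:(unfold s; lra)).
  specialize (Hc s ltac:(rewrite Rminus_0_r, Rabs_right; unfold s; lra)).
  specialize (Hu s ltac:(unfold s; lra)).
  rewrite HC0 in Hc. apply Rabs_def2 in Hc. apply Rabs_def2 in Hu.
  assert (HCs : 0 < ip n phi1 phi1 s) by (apply HC; unfold I1; lra).
  assert (Hc4 := c4_lt _ eps HCs ltac:(lra) ltac:(lra)).
  destruct (c4_facts _ HCs) as [Hc4p _].
  assert (Hm := mono s ltac:(lra)). fold lam in Hm.
  assert (HUs : 0 < U s) by (apply HUpos; lra).
  assert (HGs : G s <= lam * U s).
  { apply (Rmult_le_reg_r (/ U s)). apply Rinv_0_lt_compat; auto.
    rewrite Rmult_assoc, Rinv_r by lra. rewrite Rmult_1_r. exact Hm. }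
  assert (HsqA : sqrt (ip n phi phi s) = G s * sqrt (sqrt (ip n phi1 phi1 s))).
  { unfold G. field. lra. }
  rewrite HsqA in Ha.
  set (c := sqrt (sqrt (ip n phi1 phi1 s))) in *.
  assert (G s * c <= lam * U s * c) by (apply Rmult_le_compat_r; lra).
  assert (lam * U s * c <= lam * ((1 + eps) * s) * (1 + eps)).
  { apply Rmult_le_compat; try nra. }
  assert ((1 - eps) * s < lam * (1 + eps) ^ 2 * s) by nra.
  assert (Hfin : 1 - eps < lam * (1 + eps) ^ 2).
  { apply (Rmult_lt_reg_r s); auto. }
  unfold eps in Hfin. set (t := 1 - lam) in *. replace lam with (1 - t) in Hfin by (unfold t; ring).
  assert (0 < t < 1) by (unfold t; lra). nra.
Qed.

Lemma cont_left_le h t0 : continuity_pt h t0 -> 0 < t0 -> (forall s, 0 < s < t0 -> h s <= 0) -> h t0 <= 0.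
Proof. intros Hc Ht0 Hs. destruct (Rle_lt_dec (h t0) 0) as [|Hlt]; auto. exfalso.
  destruct (cont_eps _ _ Hc (h t0) Hlt) as [d [Hd Hy]].
  set (s := t0 - Rmin d t0 / 2).
  pose proof (Rmin_l d t0). pose proof (Rmin_r d t0). assert (0 < Rmin d t0) by (apply Rmin_pos; lra).
  specialize (Hy s ltac:(unfold s; rewrite Rabs_left; lra)). apply Rabs_def2 in Hy.
  specialize (Hs s ltac:(unfold s; lra)). lra. Qed.

Lemma sqrt_pos_inv y : 0 < sqrt y -> 0 < y.
Proof. intro H. destruct (Rle_lt_dec y 0) as [Hy|]; auto. rewrite sqrt_neg_0 in H; lra. Qed.

Lemma G_cont n phi phi1 phi2 t
  (H1 : forall i, (i < n)%nat -> derivable_pt_lim (phi i) t (phi1 i t))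
  (H2 : forall i, (i < n)%nat -> derivable_pt_lim (phi1 i) t (phi2 i t))
  (HC : 0 < ip n phi1 phi1 t) :
  continuity_pt (fun s => sqrt (ip n phi phi s) / sqrt (sqrt (ip n phi1 phi1 s))) t.
Proof.
  assert (cA := D_cont _ _ _ (A_D n phi phi1 t H1)).
  assert (cC := D_cont _ _ _ (A_D n phi1 phi2 t H2)).
  assert (c1 := continuity_pt_comp _ sqrt t cA (continuity_pt_sqrt _ (inner_nonneg _ _))).
  destruct (sqrt_facts _ HC) as [Hs _].
  assert (c2 := continuity_pt_comp _ sqrt t cC (continuity_pt_sqrt _ (Rlt_le _ _ HC))).
  assert (c3 := continuity_pt_comp _ sqrt t c2 (continuity_pt_sqrt _ (Rlt_le _ _ Hs))).
  destruct (c4_facts _ HC) as [Hc4 _].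
  exact (continuity_pt_div _ _ t c1 c3 ltac:(unfold comp; lra)).
Qed.

Lemma pos_side n phi phi1 phi2 phi3 p F F1 F2
 (Hphi1 : forall i x, (i < n)%nat -> I1 x -> derivable_pt_lim (phi i) x (phi1 i x))
 (Hphi2 : forall i x, (i < n)%nat -> I1 x -> derivable_pt_lim (phi1 i) x (phi2 i x))
 (Hphi3 : forall i x, (i < n)%nat -> I1 x -> derivable_pt_lim (phi2 i) x (phi3 i x))
 (HC : forall x, I1 x -> 0 < ip n phi1 phi1 x)
 (Hphi0 : forall i, (i < n)%nat -> phi i 0 = 0)
 (HC0 : ip n phi1 phi1 0 = 1)
 (HF1 : forall x, I1 x -> derivable_pt_lim F x (F1 x))
 (HF2 : forall x, I1 x -> derivable_pt_lim F1 x (F2 x))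
 (HF1pos : forall x, I1 x -> 0 < F1 x)
 (HFschw : forall x, I1 x -> derivable_pt_lim (fun t => F2 t / F1 t) x (2 * p x + 1 / 2 * (F2 x / F1 x) ^ 2))
 (HF0 : F 0 = 0) (HF10 : F1 0 = 1)
 (HS1 : forall x, I1 x -> S1 n (fun i => phi1 i x) (fun i => phi2 i x) (fun i => phi3 i x) <= 2 * p x)
 x (Hx : 0 < x < 1) :
 vnorm n (fun i => phi i x) / sqrt (vnorm n (fun i => phi1 i x)) >= Rabs (F x) / sqrt (F1 x).
Proof.
  assert (I0 : I1 0) by (unfold I1; lra).
  assert (MP := main_pos n phi phi1 phi2 phi3 p F F1 F2 Hphi1 Hphi2 Hphi3 HC Hphi0 HC0 HF1 HF2 HF1pos HFschw HF0 HF10 HS1).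
  assert (HFpos : forall s, 0 < s < 1 -> 0 < F s).
  { intros s Hs. assert (Hd : forall c, 0 <= c <= s -> derivable_pt_lim F c (F1 c)).
    { intros c Hc. apply HF1. unfold I1; lra. }
    destruct (MVT_cor2 F F1 0 s ltac:(lra) Hd) as [c [Hc1 Hc2]].
    assert (0 < F1 c) by (apply HF1pos; unfold I1; lra). rewrite HF0 in Hc1. nra. }
  assert (HUpos : forall s, 0 < s < 1 -> 0 < F s / sqrt (F1 s)).
  { intros s Hs. apply Rdiv_lt_0_compat. auto. apply sqrt_lt_R0, HF1pos; unfold I1; lra. }
  assert (Apos : forall t, 0 < t < 1 -> 0 < ip n phi phi t).
  { intros t1 Ht1. destruct (Rlt_le_dec 0 (ip n phi phi t1)) as [|Hle]; auto. exfalso.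
    set (E := fun t => 0 <= t <= t1 /\ forall s, 0 < s <= t -> 0 < ip n phi phi s).
    assert (HEb : bound E) by (exists t1; intros t [Ht _]; lra).
    assert (HE0 : exists t, E t) by (exists 0; split; [lra| intros; lra]).
    destruct (completeness E HEb HE0) as [t0 [Hub Hlub]].
    assert (Ht0t1 : t0 <= t1) by (apply Hlub; intros t [Ht _]; lra).
    assert (P1 : forall s, 0 < s < t0 -> 0 < ip n phi phi s).
    { intros s Hs. destruct (Rlt_le_dec 0 (ip n phi phi s)) as [|Hs2]; auto. exfalso.
      assert (t0 <= s).
      { apply Hlub. intros t [Ht Ht']. destruct (Rle_lt_dec t s); auto.
        specialize (Ht' s ltac:(lra)). lra. }
      lra. }
    assert (P2 : 0 < t0).
    { destruct (lowA n phi phi1 (fun i Hi => Hphi1 i 0 Hi I0) Hphi0 HC0 (1/2) ltac:(lra)) as [da [Hda Ha]].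
      set (d' := Rmin da t1 / 2).
      pose proof (Rmin_l da t1). pose proof (Rmin_r da t1). assert (0 < Rmin da t1) by (apply Rmin_pos; lra).
      assert (E d').
      { split. unfold d'; lra. intros s Hs. apply sqrt_pos_inv. specialize (Ha s ltac:(unfold d' in Hs; lra)). nra. }
      assert (d' <= t0) by (apply Hub; auto). unfold d' in *; lra. }
    assert (P3 : 0 < ip n phi phi t0).
    { assert (It0 : I1 t0) by (unfold I1; lra).
      assert (cG := G_cont n phi phi1 phi2 t0 (fun i Hi => Hphi1 i t0 Hi It0) (fun i Hi => Hphi2 i t0 Hi It0) (HC t0 It0)).
      assert (cU := D_cont _ _ _ (U_D F F1 F2 t0 (HF1 t0 It0) (HF2 t0 It0) (HF1pos t0 It0))).
      assert (cd := continuity_pt_minus _ _ t0 cU cG).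
      assert (Hle' := cont_left_le _ t0 cd P2).
      cbv beta in Hle'. unfold minus_fct in Hle'.
      assert (F t0 / sqrt (F1 t0) - sqrt (ip n phi phi t0) / sqrt (sqrt (ip n phi1 phi1 t0)) <= 0).
      { apply Hle'. intros s Hs. assert (MP' := MP s ltac:(lra) ltac:(intros r Hr; apply P1; lra)). lra. }
      assert (0 < F t0 / sqrt (F1 t0)) by (apply HUpos; lra).
      destruct (c4_facts _ (HC t0 It0)) as [Hc4 _].
      assert (0 < sqrt (ip n phi phi t0)).
      { assert (0 < sqrt (ip n phi phi t0) / sqrt (sqrt (ip n phi1 phi1 t0))) by lra.
        destruct (Rle_lt_dec (sqrt (ip n phi phi t0)) 0); auto.
        assert (sqrt (ip n phi phi t0) = 0) by (pose proof (sqrt_pos (ip n phi phi t0)); lra).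
        rewrite H2 in H1. unfold Rdiv in H1. rewrite Rmult_0_l in H1. lra. }
      apply sqrt_pos_inv; auto. }
    assert (P4 : t0 < t1) by (destruct (Req_dec t0 t1); [subst; lra| lra]).
    assert (It0 : I1 t0) by (unfold I1; lra).
    assert (cA := D_cont _ _ _ (A_D n phi phi1 t0 (fun i Hi => Hphi1 i t0 Hi It0))).
    destruct (cont_eps _ _ cA _ P3) as [d [Hd Hy]].
    set (t' := Rmin (t0 + d / 2) t1).
    pose proof (Rmin_l (t0 + d/2) t1). pose proof (Rmin_r (t0 + d/2) t1).
    assert (t0 < t') by (unfold t'; apply Rmin_glb_lt; lra).
    assert (E t').
    { unfold t' in *. split. lra. intros s Hs. destruct (Rlt_le_dec s t0). apply P1; lra.
      specialize (Hy s ltac:(rewrite Rabs_right; lra)). apply Rabs_def2 in Hy. lra. }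
    assert (t' <= t0) by (apply Hub; auto). lra. }
  rewrite Rabs_right by (left; apply HFpos; auto). apply Rle_ge.
  apply MP; auto. intros s Hs; apply Apos; lra.
Qed.

Lemma ddopp f x l : derivable_pt_lim f x l -> derivable_pt_lim (fun t => - f t) x (- l).
Proof. intro H. eapply ddext; [| |apply (ddmul (fun _ => -1) f); [apply ddconst| exact H]]; intros; simpl; ring. Qed.

Lemma inner_oppl n u v : inner n (fun i => - u i) v = - inner n u v.
Proof. rewrite !inner_lsum. unfold lsum. induction (seq 0 n); simpl; [ring|]. rewrite IHl. ring. Qed.
Lemma inner_oppr n u v : inner n u (fun i => - v i) = - inner n u v.
Proof. rewrite !inner_lsum. unfold lsum. induction (seq 0 n); simpl; [ring|]. rewrite IHl. ring. Qed.
Lemma inner_opp2 n u v : inner n (fun i => - u i) (fun i => - v i) = inner n u v.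
Proof. rewrite inner_oppl, inner_oppr. ring. Qed.

Lemma S1_refl n a b c : S1 n (fun i => - a i) b (fun i => - c i) = S1 n a b c.
Proof. unfold S1, vnorm. rewrite !inner_opp2, !inner_oppl. replace ((- inner n a b)^2) with (inner n a b ^2) by ring. reflexivity. Qed.

Lemma F1_pos F1 F2
  (HF2 : forall x, I1 x -> derivable_pt_lim F1 x (F2 x))
  (HF1nz : forall x, I1 x -> F1 x <> 0) (HF10 : F1 0 = 1) : forall x, I1 x -> 0 < F1 x.
Proof.
  intros x Hx. destruct (Rlt_le_dec 0 (F1 x)) as [|Hle]; auto. exfalso.
  assert (Hlt : F1 x < 0) by (destruct Hle; auto; exfalso; apply (HF1nz x); auto).
  unfold I1 in Hx.
  destruct (Rlt_le_dec 0 x) as [Hxp|Hxn].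
  - assert (Hc : forall a, 0 <= a <= x -> continuity_pt (fun t => - F1 t) a).
    { intros a Ha. apply D_cont with (l := - F2 a). apply ddopp, HF2. unfold I1; lra. }
    destruct (IVT_interv _ 0 x Hc Hxp ltac:(lra) ltac:(lra)) as [z [Hz1 Hz2]].
    apply (HF1nz z). unfold I1; lra. lra.
  - assert (Hx0 : x < 0) by (destruct Hxn; auto; subst; lra).
    assert (Hc : forall a, x <= a <= 0 -> continuity_pt F1 a).
    { intros a Ha. apply D_cont with (l := F2 a). apply HF2. unfold I1; lra. }
    destruct (IVT_interv _ x 0 Hc Hx0 ltac:(lra) ltac:(lra)) as [z [Hz1 Hz2]].
    apply (HF1nz z). unfold I1; lra. lra.
Qed.

Theorem mainTheorem2
  (p : R -> R)
  (Hp_pos : forall x, I1 x -> 0 < p x)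
  (Hp_cont : forall x, I1 x -> continuity_pt p x)
  (Hp_even : forall x, I1 x -> p (- x) = p x)
  (Hp_disc : disconjugate p)
  (F F1 F2 : R -> R)
  (HF1 : forall x, I1 x -> derivable_pt_lim F x (F1 x))
  (HF2 : forall x, I1 x -> derivable_pt_lim F1 x (F2 x))
  (HF1nz : forall x, I1 x -> F1 x <> 0)
  (HFschw : forall x, I1 x ->
     derivable_pt_lim (fun t => F2 t / F1 t) x
       (2 * p x + 1 / 2 * (F2 x / F1 x) ^ 2))
  (HF0 : F 0 = 0) (HF10 : F1 0 = 1) (HF20 : F2 0 = 0)
  (n : nat)
  (phi phi1 phi2 phi3 : nat -> R -> R)
  (Hphi1 : forall i x, (i < n)%nat -> I1 x -> derivable_pt_lim (phi i) x (phi1 i x))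
  (Hphi2 : forall i x, (i < n)%nat -> I1 x -> derivable_pt_lim (phi1 i) x (phi2 i x))
  (Hphi3 : forall i x, (i < n)%nat -> I1 x -> derivable_pt_lim (phi2 i) x (phi3 i x))
  (Hphi3c : forall i x, (i < n)%nat -> I1 x -> continuity_pt (phi3 i) x)
  (Hphi1nz : forall x, I1 x -> vnorm n (fun i => phi1 i x) <> 0)
  (Hphi0 : forall i, (i < n)%nat -> phi i 0 = 0)
  (Hphi10 : vnorm n (fun i => phi1 i 0) = 1)
  (Hphi120 : inner n (fun i => phi1 i 0) (fun i => phi2 i 0) = 0)
  (HS1 : forall x, I1 x ->
     S1 n (fun i => phi1 i x) (fun i => phi2 i x) (fun i => phi3 i x) <= 2 * p x) :
  forall x, I1 x ->
    vnorm n (fun i => phi i x) / sqrt (vnorm n (fun i => phi1 i x))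
    >= Rabs (F x) / sqrt (F1 x).
Proof.
  assert (HC : forall x, I1 x -> 0 < ip n phi1 phi1 x).
  { intros x Hx. specialize (Hphi1nz x Hx). unfold vnorm in Hphi1nz.
    pose proof (inner_nonneg n (fun i => phi1 i x)) as Hn. destruct Hn as [Hn|Hn]; auto.
    exfalso. apply Hphi1nz. rewrite <- Hn. apply sqrt_0. }
  assert (HC0 : ip n phi1 phi1 0 = 1).
  { unfold vnorm in Hphi10. unfold ip. rewrite <- (sqrt_sqrt (inner n (fun i => phi1 i 0) (fun i => phi1 i 0)))
      by apply inner_nonneg. rewrite Hphi10. ring. }
  assert (HF1pos := F1_pos F1 F2 HF2 HF1nz HF10).
  assert (PS := pos_side n phi phi1 phi2 phi3 p F F1 F2 Hphi1 Hphi2 Hphi3 HC Hphi0 HC0 HF1 HF2 HF1pos HFschw HF0 HF10 HS1).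
  intros x Hx. unfold I1 in Hx.
  destruct (Rtotal_order x 0) as [Hneg|[Hz|Hpos]].
  2:{ subst x. rewrite HF0, Rabs_R0. unfold vnorm. fold (ip n phi phi 0). rewrite ip_zero0 by auto.
      rewrite sqrt_0. unfold Rdiv. rewrite !Rmult_0_l. lra. }
  2:{ apply PS; lra. }
  set (rphi := fun i t => phi i (- t)).
  set (rphi1 := fun i t => - phi1 i (- t)).
  set (rphi2 := fun i t => phi2 i (- t)).
  set (rphi3 := fun i t => - phi3 i (- t)).
  set (rF := fun t => - F (- t)).
  set (rF1 := fun t => F1 (- t)).
  set (rF2 := fun t => - F2 (- t)).
  assert (Ineg : forall t, I1 t -> I1 (- t)) by (unfold I1; intros; lra).
  assert (R1 : forall i t, (i < n)%nat -> I1 t -> derivable_pt_lim (rphi i) t (rphi1 i t)).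
  { intros i t Hi Ht. apply ddrefl. apply Hphi1; auto. }
  assert (R2 : forall i t, (i < n)%nat -> I1 t -> derivable_pt_lim (rphi1 i) t (rphi2 i t)).
  { intros i t Hi Ht. eapply ddext; [reflexivity| | apply ddopp, ddrefl, Hphi2; auto]. unfold rphi2; ring. }
  assert (R3 : forall i t, (i < n)%nat -> I1 t -> derivable_pt_lim (rphi2 i) t (rphi3 i t)).
  { intros i t Hi Ht. apply ddrefl. apply Hphi3; auto. }
  assert (RC : forall t, I1 t -> 0 < ip n rphi1 rphi1 t).
  { intros t Ht. unfold ip, rphi1. rewrite inner_opp2. apply HC; auto. }
  assert (R0 : forall i, (i < n)%nat -> rphi i 0 = 0).
  { intros i Hi. unfold rphi. rewrite Ropp_0. auto. }
  assert (RC0 : ip n rphi1 rphi1 0 = 1).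
  { unfold ip, rphi1. rewrite inner_opp2, Ropp_0. exact HC0. }
  assert (RF1 : forall t, I1 t -> derivable_pt_lim rF t (rF1 t)).
  { intros t Ht. eapply ddext; [reflexivity| | apply ddopp, ddrefl, HF1; auto]. unfold rF1; ring. }
  assert (RF2 : forall t, I1 t -> derivable_pt_lim rF1 t (rF2 t)).
  { intros t Ht. apply ddrefl, HF2; auto. }
  assert (RF1pos : forall t, I1 t -> 0 < rF1 t).
  { intros t Ht. apply HF1pos; auto. }
  assert (RFschw : forall t, I1 t -> derivable_pt_lim (fun s => rF2 s / rF1 s) t (2 * p t + 1 / 2 * (rF2 t / rF1 t) ^ 2)).
  { intros t Ht. eapply ddext; [| | apply ddopp, ddrefl, HFschw; auto].
    - intros z. unfold rF2, rF1. unfold Rdiv; ring.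
    - unfold rF2, rF1. rewrite Hp_even by auto. unfold Rdiv; ring. }
  assert (RF0 : rF 0 = 0) by (unfold rF; rewrite Ropp_0, HF0; ring).
  assert (RF10 : rF1 0 = 1) by (unfold rF1; rewrite Ropp_0; auto).
  assert (RS1 : forall t, I1 t -> S1 n (fun i => rphi1 i t) (fun i => rphi2 i t) (fun i => rphi3 i t) <= 2 * p t).
  { intros t Ht. unfold rphi1, rphi2, rphi3.
    rewrite (S1_refl n (fun i => phi1 i (- t)) (fun i => phi2 i (- t)) (fun i => phi3 i (- t))).
    rewrite <- Hp_even by auto. apply HS1; auto. }
  assert (Hx' : 0 < - x < 1) by lra.
  assert (PR := pos_side n rphi rphi1 rphi2 rphi3 p rF rF1 rF2 R1 R2 R3 RC R0 RC0 RF1 RF2 RF1pos RFschw RF0 RF10 RS1 (- x) Hx').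
  unfold rphi, rphi1, rF, rF1 in PR. rewrite Ropp_involutive in PR.
  unfold vnorm in PR |- *. rewrite inner_opp2, Rabs_Ropp in PR. exact PR.
Qed.
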